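(* Let $\varepsilon>0$, let $\widetilde M_f,\widetilde M_g$ be as in the context, and let $\varphi:\widetilde M_f\to\widetilde M_g$ be the continuous map $\varphi=\phi_1\cup\cdots\cup\phi_{\eta_f}$ obtained from a leaf assignment whose path extensions agree pairwise at least common ancestors of leaves. Suppose that for every leaf node $w$ of $\widetilde M_g$ with $w\notin\mathrm{Im}(\varphi)$, the nearest ancestor $w^a$ of $w$ lying in $\mathrm{Im}(\varphi)$ satisfies $|\tilde g(w^a)-\tilde g(w)|\le2\varepsilon$. Then for every point $x\in\widetilde M_g\setminus\mathrm{Im}(\varphi)$, the nearest ancestor $x^a$ of $x$ lying in $\mathrm{Im}(\varphi)$ satisfies $|\tilde g(x^a)-\tilde g(x)|\le 2\varepsilon$.
   Context: A finite merge tree is a finite rooted tree regarded as a topological space, with a continuous height function strictly increasing along each edge toward the root. Let $M_f$ (height $\tilde f$, root $r_f$) and $M_g$ (height $\tilde g$, root $r_g$) be finite merge trees with $\tilde g(r_g)=\tilde f(r_f)+\varepsilon$. Let $H=\{\tilde f(u): u \text{ a node of } M_f\}\cup\{\tilde g(w)-\varepsilon: w\text{ a node of } M_g\}$. $\widetilde M_f$ is obtained from $M_f$ by inserting a degree-two node at every point $x$ with $\tilde f(x)\in H$ not already a node; $\widetilde M_g$ from $M_g$ by inserting degree-two nodes at all points with $\tilde g$-value in $H+\varepsilon$ not already nodes. Let $u_1,\dots,u_{\eta_f}$ be the leaves of $\widetilde M_f$, and $\phi$ assign to each $u_i$ a node $\phi(u_i)$ of $\widetilde M_g$ with $\tilde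 g(\phi(u_i))=\tilde f(u_i)+\varepsilon$. With $P_i$ the path from $u_i$ to the root of $\widetilde M_f$ and $P_i'$ that from $\phi(u_i)$ to the root of $\widetilde M_g$, $\phi_i:P_i\to P_i'$ sends $x$ to the unique point of $P_i'$ with $\tilde g$-value $\tilde f(x)+\varepsilon$; it is assumed $\phi_i(v)=\phi_j(v)$ for $v=\mathrm{LCA}(u_i,u_j)$ (lowest common ancestor) for all $i\ne j$, so $\varphi(x)=\phi_i(x)$ for $x\in P_i$ is well-defined. An ancestor of a point $x$ is a point on the upward path from $x$ to the root; the root of $\widetilde M_g$ lies in $\mathrm{Im}(\varphi)$, so nearest ancestors in the image exist. *)

(* Defs.v *)
From mathcomp Require Import all_boot all_order all_algebra.
Set Implicit Arguments. Unset Strict Implicit. Unset Printing Implicit Defensive.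
Import Order.TTheory GRing.Theory Num.Theory.
Local Open Scope ring_scope.

Section MergeTree.
Variable R : realFieldType.
Variable V : finType.

Definition is_merge_tree (par : V -> V) (r : V) (h : V -> R) : Prop :=
  [/\ par r = r,
      (forall v, v != r -> h v < h (par v)) &
      (forall v, exists k, iter k par v = r)].

(* Points of the geometric realization: a point is (v, t) lying on the edge
   from v (included) to par v (excluded) at height t; the root is (r, h r). *)
Definition mpoint (par : V -> V) (r : V) (h : V -> R) (p : V * R) : bool :=
  if p.1 == r then p.2 == h r else (h p.1 <= p.2) && (p.2 < h (par p.1)).

Definition nanc (par : V -> V) (u v : V) : Prop := exists k, iter k par v = u.

Definition panc (par : V -> V) (y x : V * R) : Prop :=
  nanc par y.1 x.1 /\ x.2 <= y.2.

Definition is_leaf (par : V -> V) (w : V) : Prop :=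
  forall v, par v = w -> v = w.

Definition is_lca (par : V -> V) (l u1 u2 : V) : Prop :=
  [/\ nanc par l u1, nanc par l u2 &
      forall m, nanc par m u1 -> nanc par m u2 -> nanc par m l].

Definition path_at (par : V -> V) (r : V) (h : V -> R) (p : V * R) (s : R)
  (y : V * R) : Prop :=
  [/\ mpoint par r h y, panc par y p & y.2 = s].

Definition nearest_anc_in (par : V -> V) (r : V) (h : V -> R)
  (S : V * R -> Prop) (x y : V * R) : Prop :=
  [/\ mpoint par r h y, panc par y x, S y &
      forall z, mpoint par r h z -> panc par z x -> S z -> panc par z y].
End MergeTree.

Section Phi.
Variable R : realFieldType.
Variables (Vf Vg : finType).
Variables (parf : Vf -> Vf) (rf : Vf) (hf : Vf -> R).
Variables (parg : Vg -> Vg) (rg : Vg) (hg : Vg -> R).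
Variable eps : R.

(* Nodes of \tilde M_g: points of M_g whose height lies in H + eps, where
   H = {hf u} U {hg w - eps}  (this includes all original nodes of M_g). *)
Definition tnode_g (p : Vg * R) : Prop :=
  mpoint parg rg hg p /\
  ((exists u : Vf, p.2 = hf u + eps) \/ (exists w : Vg, p.2 = hg w)).

(* phi_u : P_u -> P'_u, x |-> the point of the path from phi u with height
   hf-height(x) + eps; here as a relation. *)
Definition phi_i (phi : Vf -> Vg * R) (u : Vf) (x : Vf * R) (y : Vg * R)
  : Prop :=
  [/\ mpoint parf rf hf x, panc parf x (u, hf u) &
      path_at parg rg hg (phi u) (x.2 + eps) y].

Definition leaf_assignment (phi : Vf -> Vg * R) : Prop :=
  forall u, is_leaf parf u -> tnode_g (phi u) /\ (phi u).2 = hf u + eps.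

Definition agree_at_lca (phi : Vf -> Vg * R) : Prop :=
  forall u1 u2 l, is_leaf parf u1 -> is_leaf parf u2 -> u1 != u2 ->
    is_lca parf l u1 u2 ->
    forall y1 y2, phi_i phi u1 (l, hf l) y1 -> phi_i phi u2 (l, hf l) y2 ->
    y1 = y2.

Definition in_image (phi : Vf -> Vg * R) (y : Vg * R) : Prop :=
  exists u, is_leaf parf u /\ exists x, phi_i phi u x y.
End Phi.

(* Main.v *)
Require Import Defs.
From mathcomp Require Import all_boot all_order all_algebra.
Set Implicit Arguments. Unset Strict Implicit.
Import Order.TTheory GRing.Theory Num.Theory.
Local Open Scope ring_scope.

Section H.
Variable R : realFieldType.
Variable V : finType.
Variables (par : V -> V) (r : V) (h : V -> R).
Hypothesis MT : is_merge_tree par r h.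

Lemma nanc_refl v : nanc par v v.
Proof. by exists 0%N. Qed.

Lemma nanc_trans a b c : nanc par a b -> nanc par b c -> nanc par a c.
Proof. move=> [k1 <-] [k2 <-]; exists (k1 + k2)%N; by rewrite iterD. Qed.

Lemma nanc_par v : nanc par (par v) v.
Proof. by exists 1%N. Qed.

Lemma mono k v : h v <= h (iter k par v).
Proof.
case: MT => Hr Hlt _.
elim: k => [|k IH] //=.
case: (eqVneq (iter k par v) r) => [E|NE].
  by rewrite E Hr -E.
by apply: (le_trans IH); apply/ltW/Hlt.
Qed.

Lemma h_le_root v : h v <= h r.
Proof. case: MT => _ _ Hk; have [k <-] := Hk v; exact: mono. Qed.

Lemma mpoint_le p : mpoint par r h p -> h p.1 <= p.2 /\ p.2 <= h r.
Proof.
rewrite /mpoint; case: eqP => [->|NE].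
  by move/eqP => ->.
move=> /andP[H1 H2]; split => //.
by apply: ltW; apply: (lt_le_trans H2); apply: h_le_root.
Qed.

Lemma mpoint_lt_par p : p.1 != r -> mpoint par r h p -> p.2 < h (par p.1).
Proof. by rewrite /mpoint => /negbTE ->; case/andP. Qed.

Lemma comparable_pts p q w : mpoint par r h p -> mpoint par r h q ->
  nanc par p.1 w -> nanc par q.1 w -> p.2 <= q.2 -> nanc par q.1 p.1.
Proof.
move=> Mp Mq [a Ea] [b Eb] Hle.
case: MT => Hr Hlt _.
case: (leqP a b) => Hab.
  exists (b - a)%N; by rewrite -Ea -iterD subnK.
have E : p.1 = iter (a - b) par q.1.
  by rewrite -Ea -Eb -iterD subnK // ltnW.
case: (eqVneq q.1 r) => [Eq|Nq].
  exists 0%N; rewrite /= E Eq.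
  by elim: (a - b)%N => //= n ->.
exfalso.
have Hq := mpoint_lt_par Nq Mq.
have [Hp _] := mpoint_le Mp.
have : h (par q.1) <= h p.1.
  rewrite E; case H: (a - b)%N => [|n]; first by move/eqP: H; rewrite subn_eq0 leqNgt Hab.
  by rewrite iterSr; apply: mono.
move=> H1.
have := lt_le_trans Hq (le_trans H1 (le_trans Hp Hle)).
by rewrite ltxx.
Qed.

Lemma point_at u t : h u <= t -> t <= h r ->
  exists v, nanc par v u /\ mpoint par r h (v, t).
Proof.
case: MT => Hr Hlt Hk.
have [k Ek] := Hk u.
elim: k u Ek => [|k IH] u Ek Hu Ht.
  move: Ek => /= Eu; subst u.
  exists r; split; first exact: nanc_refl.
  by rewrite /mpoint /= eqxx; apply/eqP/le_anti; rewrite Hu Ht.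
case: (eqVneq u r) => [Eu|Nu].
  subst u; exists r; split; first exact: nanc_refl.
  by rewrite /mpoint /= eqxx; apply/eqP/le_anti; rewrite Hu Ht.
case: (ltP t (h (par u))) => Htp.
  exists u; split; first exact: nanc_refl.
  by rewrite /mpoint /= (negbTE Nu) Hu Htp.
rewrite iterSr in Ek.
have [v [Hv Mv]] := IH _ Ek Htp Ht.
exists v; split => //; exact: nanc_trans Hv (nanc_par u).
Qed.

Lemma leaf_below v : exists w, is_leaf par w /\ nanc par v w.
Proof.
case: MT => Hr Hlt Hk.
move: {2}#|[set u | h u < h v]| (leqnn #|[set u | h u < h v]|) => n.
elim: n v => [|n IH] v Hn.
- exists v; split; last exact: nanc_refl.
  move=> c Ec; apply/eqP/negPn/negP => Nc.
  have Ncr : c != r by apply: contraNneq Nc => Ecr; rewrite -Ec Ecr Hr.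
  have := Hlt c Ncr; rewrite Ec => Hc.
  have : c \in [set u | h u < h v] by rewrite inE.
  by move: Hn; rewrite leqn0 => /eqP/cards0_eq ->; rewrite inE.
- case: (boolP [exists c, (par c == v) && (c != v)]).
  + move=> /existsP[c /andP[/eqP Ec Nc]].
    have Ncr : c != r by apply: contraNneq Nc => Ecr; rewrite -Ec Ecr Hr.
    have Hc := Hlt c Ncr; rewrite Ec in Hc.
    have Hsub : [set u | h u < h c] \proper [set u | h u < h v].
      apply/properP; split.
        by apply/subsetP => x; rewrite !inE => Hx; apply: lt_trans Hx Hc.
      by exists c; rewrite !inE // ltxx.
    have := proper_card Hsub => Hcard.
    have [w [Lw Nw]] := IH c (leq_trans (ltnSE (leq_trans Hcard Hn)) (leqnn _)).
    exists w; split => //; apply: nanc_trans _ Nw.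
    by rewrite -Ec; exact: nanc_par.
  + move=> /existsPn Hno; exists v; split; last exact: nanc_refl.
    move=> c Ec; apply/eqP; have := Hno c; rewrite Ec eqxx /=.
    by move/negbNE.
Qed.
End H.

Lemma up_closed (R : realFieldType) (Vf Vg : finType)
  (parf : Vf -> Vf) (rf : Vf) (hf : Vf -> R)
  (parg : Vg -> Vg) (rg : Vg) (hg : Vg -> R)
  (eps : R) (phi : Vf -> Vg * R) :
  is_merge_tree parf rf hf ->
  is_merge_tree parg rg hg ->
  hg rg = hf rf + eps ->
  forall y z, in_image parf rf hf parg rg hg eps phi y ->
  mpoint parg rg hg z -> panc parg z y ->
  in_image parf rf hf parg rg hg eps phi z.
Proof.
move=> MTf MTg Hroot y z [u [Lu [x' [Mx' [Nx' Hux'] [My [Ny Hy] Ey]]]]] Mz [Nz Hz].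
exists u; split => //.
have [_ Hzr] := mpoint_le MTg Mz.
have Ht1 : hf u <= z.2 - eps by rewrite lerBrDr; apply: (le_trans _ Hz); rewrite Ey lerD2r.
have Ht2 : z.2 - eps <= hf rf by rewrite lerBlDr -Hroot.
have [v [Nv Mv]] := point_at MTf Ht1 Ht2.
exists (v, z.2 - eps); split => //.
split => //=; last by rewrite subrK.
split; first exact: nanc_trans Nz Ny.
exact: le_trans Hy Hz.
Qed.

Theorem lemma4p9 (R : realFieldType) (Vf Vg : finType)
  (parf : Vf -> Vf) (rf : Vf) (hf : Vf -> R)
  (parg : Vg -> Vg) (rg : Vg) (hg : Vg -> R)
  (eps : R) (phi : Vf -> Vg * R) :
  0 < eps ->
  is_merge_tree parf rf hf ->
  is_merge_tree parg rg hg ->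
  hg rg = hf rf + eps ->
  leaf_assignment parf hf parg rg hg eps phi ->
  agree_at_lca parf rf hf parg rg hg eps phi ->
  (forall w, is_leaf parg w ->
     ~ in_image parf rf hf parg rg hg eps phi (w, hg w) ->
     forall wa, nearest_anc_in parg rg hg
                  (in_image parf rf hf parg rg hg eps phi) (w, hg w) wa ->
     `|wa.2 - hg w| <= 2 * eps) ->
  forall x, mpoint parg rg hg x ->
    ~ in_image parf rf hf parg rg hg eps phi x ->
    forall xa, nearest_anc_in parg rg hg
                 (in_image parf rf hf parg rg hg eps phi) x xa ->
    `|xa.2 - x.2| <= 2 * eps.
Proof.
move=> _ MTf MTg Hroot _ _ Hleaf x Mx Nix xa [Mxa [Nxa Hxa] Ixa Hnear].
have UC := @up_closed _ _ _ _ _ _ _ _ _ _ phi MTf MTg Hroot.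
have [w [Lw Nw]] := leaf_below MTg x.1.
have [Hx1 _] := mpoint_le MTg Mx.
have Hwx : hg w <= x.2.
  case: Nw => k Ek; rewrite -Ek in Hx1; exact: le_trans (mono MTg k w) Hx1.
have Niw : ~ in_image parf rf hf parg rg hg eps phi (w, hg w).
  by move=> Iw; apply: Nix; apply: (UC _ _ Iw Mx); split.
have Hn : nearest_anc_in parg rg hg (in_image parf rf hf parg rg hg eps phi) (w, hg w) xa.
  split => //.
    by split; [exact: nanc_trans Nxa Nw | exact: le_trans Hwx Hxa].
  move=> z Mz [/= Nzw Hzw] Iz.
  case: (boolP (z.2 <= x.2)) => Hzx.
    exfalso; apply: Nix; apply: (UC _ _ Iz Mx); split => //.
    exact: (comparable_pts MTg Mz Mx Nzw Nw Hzx).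
  rewrite -ltNge in Hzx.
  apply: Hnear => //; split => //.
  - exact: (comparable_pts MTg Mx Mz Nw Nzw (ltW Hzx)).
  - exact: ltW.
have := Hleaf w Lw Niw xa Hn.
rewrite !ger0_norm ?subr_ge0 //; last exact: le_trans Hwx Hxa.
apply: le_trans; exact: lerB.
Qed.
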